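(* Let $p\in\Gamma\backslash G$ be Diophantine of type $(\kappa_1,\dots,\kappa_k)$, fix $j\in\{1,\dots,k\}$ and let $0<\gamma<\frac1{\kappa_j+4}$. Then there is $C>0$ depending only on $p$ and $\gamma$ such that for all sufficiently small $\epsilon>0$ and all $T\ge1$, $$\frac1T\,m\Big(\Big\{x\in[1,T]:\ p\begin{pmatrix}x^{1/4}&x^{3/4+\gamma}\\0&x^{-1/4}\end{pmatrix}\in S_{j,\ \epsilon x^{-\frac14+\frac1{\kappa_j+4}}}\Big\}\Big)\le C\epsilon,$$ where $m$ is Lebesgue measure.
   Context: $G=\mathrm{PSL}(2,\mathbb R)$ acts on $\mathfrak H$ by Möbius transformations and linearly on $\mathbb R^2/\pm$. $\Gamma<G$ is a non-uniform lattice; $u(t)=\begin{pmatrix}1&t\\0&1\end{pmatrix}$, $N=\{u(t)\}$, $e_1=(1,0)^T$. Let $\eta_1,\dots,\eta_k$ be representatives of the inequivalent cusps of $\Gamma\backslash\mathfrak H$, fix $\sigma_j\in G$ with $\lim_{t\to\infty}\sigma_j\cdot(it)=\eta_j$ and $\sigma_j^{-1}\Gamma\sigma_j\cap N$ a lattice in $N$. $\Gamma_j=\Gamma\cap\sigma_jN\sigma_j^{-1}$, $\pi_j:\Gamma_j\backslash G\to\Gamma\backslash G$ the projection, $m_j(\Gamma_jg)=g^{-1}\sigma_je_1\in\mathbb R^2/\pm$. $p$ is Diophantine of type $(\kappa_1,\dots,\kappa_k)$ ($\kappa_j>0$) if for each $j$ there exist $\mu_j,\nu_j>0$ such that every $(a,b)^T\in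 m_j(\pi_j^{-1}(p))$ satisfies $|b|\ge\mu_j$ or $|a|^{\kappa_j}|b|\ge\nu_j$. For $q\in\Gamma\backslash G$, $\|q\|_j=\min\{\|v\|:v\in m_j(\pi_j^{-1}(q))\}$ and $S_{j,\delta}=\{q\in\Gamma\backslash G:\|q\|_j\le\delta\}$. *)

(* Defs.v *)
From Stdlib Require Import Reals Lra.
Open Scope R_scope.

(* 2x2 real matrices; elements of G = PSL(2,R) are represented by
   matrices of determinant 1, all notions below being invariant under g |-> -g. *)
Record mat2 := M2 { ma : R; mb : R; mc : R; md : R }.

Definition mid : mat2 := M2 1 0 0 1.
Definition mneg (g : mat2) : mat2 := M2 (- ma g) (- mb g) (- mc g) (- md g).
Definition mmul (g h : mat2) : mat2 :=
  M2 (ma g * ma h + mb g * mc h) (ma g * mb h + mb g * md h)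
     (mc g * ma h + md g * mc h) (mc g * mb h + md g * md h).
Definition mdet (g : mat2) : R := ma g * md g - mb g * mc g.
(* inverse of a determinant-one matrix *)
Definition minv (g : mat2) : mat2 := M2 (md g) (- mb g) (- mc g) (ma g).
Definition mtrace (g : mat2) : R := ma g + md g.
Definition mnorm (g : mat2) : R :=
  Rabs (ma g) + Rabs (mb g) + Rabs (mc g) + Rabs (md g).
Definition mdist (g h : mat2) : R :=
  Rabs (ma g - ma h) + Rabs (mb g - mb h) + Rabs (mc g - mc h) + Rabs (md g - md h).

Definition mapply (g : mat2) (v : R * R) : R * R :=
  (ma g * fst v + mb g * snd v, mc g * fst v + md g * snd v).
Definition vnorm (v : R * R) : R := sqrt (fst v ^ 2 + snd v ^ 2).

Definition in_G (g : mat2) : Prop := mdet g = 1.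

(* Moebius action on the upper half plane, z = x + i y *)
Definition mobius (g : mat2) (z : R * R) : R * R :=
  let x := fst z in let y := snd z in
  let wr := mc g * x + md g in let wi := mc g * y in
  let n := wr ^ 2 + wi ^ 2 in
  (((ma g * x + mb g) * wr + ma g * y * wi) / n, (mdet g * y) / n).

(* action on the boundary R u {oo}; None = oo *)
Definition bact (g : mat2) (e : option R) : option R :=
  match e with
  | Some x => if Req_EM_T (mc g * x + md g) 0 then None
              else Some ((ma g * x + mb g) / (mc g * x + md g))
  | None => if Req_EM_T (mc g) 0 then None else Some (ma g / mc g)
  end.

(* Gamma < PSL(2,R), given by its preimage in SL(2,R) *)
Definition subgroup_G (Gam : mat2 -> Prop) : Prop :=
  (forall g, Gam g -> in_G g) /\ Gam mid /\ Gam (mneg mid) /\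
  (forall g h, Gam g -> Gam h -> Gam (mmul g h)) /\
  (forall g, Gam g -> Gam (minv g)).

Definition discrete_G (Gam : mat2 -> Prop) : Prop :=
  exists d, 0 < d /\ forall g, Gam g -> mdist g mid < d -> g = mid \/ g = mneg mid.

(* hyperbolic area (outer measure dx dy / y^2) of F is finite: F is covered by
   countably many rectangles [a,b]x[c,d], 0<c<=d, with bounded total area *)
Definition hyp_area_finite (F : R -> R -> Prop) : Prop :=
  exists M, exists a b c d : nat -> R,
    (forall n, a n <= b n /\ 0 < c n /\ c n <= d n) /\
    (forall x y, F x y -> exists n, a n <= x <= b n /\ c n <= y <= d n) /\
    (forall N, sum_f_R0 (fun n => (b n - a n) * (/ c n - / d n)) N <= M).

(* finite covolume: some subset of H meeting every Gamma-orbit has finite area *)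
Definition finite_covolume (Gam : mat2 -> Prop) : Prop :=
  exists F : R -> R -> Prop, hyp_area_finite F /\
    forall x y, 0 < y -> exists g, Gam g /\ F (fst (mobius g (x, y))) (snd (mobius g (x, y))).

(* cocompact: a bounded set of G surjects onto Gamma\G *)
Definition uniform (Gam : mat2 -> Prop) : Prop :=
  exists M, forall g, in_G g -> exists h, Gam h /\ mnorm (mmul h g) <= M.

Definition nonuniform_lattice (Gam : mat2 -> Prop) : Prop :=
  subgroup_G Gam /\ discrete_G Gam /\ finite_covolume Gam /\ ~ uniform Gam.

Definition parabolic (g : mat2) : Prop :=
  g <> mid /\ g <> mneg mid /\ Rabs (mtrace g) = 2.

Definition is_cusp (Gam : mat2 -> Prop) (e : option R) : Prop :=
  exists g, Gam g /\ parabolic g /\ bact g e = e.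

Definition cusp_equiv (Gam : mat2 -> Prop) (e e' : option R) : Prop :=
  exists g, Gam g /\ bact g e = e'.

Definition cusp_reps (Gam : mat2 -> Prop) (k : nat) (eta : nat -> option R) : Prop :=
  (forall j, (j < k)%nat -> is_cusp Gam (eta j)) /\
  (forall i j, (i < k)%nat -> (j < k)%nat -> cusp_equiv Gam (eta i) (eta j) -> i = j) /\
  (forall e, is_cusp Gam e -> exists j, (j < k)%nat /\ cusp_equiv Gam e (eta j)).

(* lim_{t -> oo} s . (i t) = e  (in the Riemann sphere) *)
Definition tends_to_cusp (s : mat2) (e : option R) : Prop :=
  match e with
  | Some x0 => forall eps, 0 < eps -> exists T0, forall t, T0 < t ->
       Rabs (fst (mobius s (0, t)) - x0) + Rabs (snd (mobius s (0, t))) < eps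
  | None => forall M, exists T0, forall t, T0 < t ->
       M < fst (mobius s (0, t)) ^ 2 + snd (mobius s (0, t)) ^ 2
  end.

Definition u (t : R) : mat2 := M2 1 t 0 1.

Definition lattice_in_N (L : R -> Prop) : Prop :=
  (exists d, 0 < d /\ forall t, L t -> 0 < Rabs t < d -> False) /\
  (exists M, forall t, exists s, L s /\ Rabs (t - s) <= M).

Definition cusp_data (Gam : mat2 -> Prop) (k : nat) (eta : nat -> option R)
  (sigma : nat -> mat2) : Prop :=
  cusp_reps Gam k eta /\
  forall j, (j < k)%nat ->
    in_G (sigma j) /\ tends_to_cusp (sigma j) (eta j) /\
    (* sigma_j^{-1} Gamma sigma_j  /\  N  is a lattice in N *)
    lattice_in_N (fun t => Gam (mmul (sigma j) (mmul (u t) (minv (sigma j))))).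

(* v in m_j(pi_j^{-1}(Gamma g)) : v = (h g)^{-1} sigma_j e_1, h in Gamma (up to sign) *)
Definition mj_vec (Gam : mat2 -> Prop) (sj g : mat2) (v : R * R) : Prop :=
  exists h, Gam h /\ v = mapply (minv (mmul h g)) (ma sj, mc sj).

(* |a|^kappa, with 0^kappa = 0 *)
Definition rpow (x k : R) : R := if Req_EM_T x 0 then 0 else Rpower x k.

Definition diophantine (Gam : mat2 -> Prop) (k : nat) (sigma : nat -> mat2)
  (kappa : nat -> R) (g : mat2) : Prop :=
  (forall j, (j < k)%nat -> 0 < kappa j) /\
  forall j, (j < k)%nat -> exists mu nu, 0 < mu /\ 0 < nu /\
    forall a b, mj_vec Gam (sigma j) g (a, b) ->
      mu <= Rabs b \/ nu <= rpow (Rabs a) (kappa j) * Rabs b.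

(* Gamma g in S_{j,delta}, i.e. ||Gamma g||_j <= delta *)
Definition in_S (Gam : mat2 -> Prop) (sj g : mat2) (delta : R) : Prop :=
  exists v, mj_vec Gam sj g v /\ vnorm v <= delta.

Definition leb_outer_le (E : R -> Prop) (r : R) : Prop :=
  forall eta, 0 < eta -> exists a b : nat -> R,
    (forall n, a n <= b n) /\
    (forall x, E x -> exists n, a n <= x <= b n) /\
    (forall N, sum_f_R0 (fun n => b n - a n) N <= r + eta).

Definition Mx (x gam : R) : mat2 :=
  M2 (Rpower x (1/4)) (Rpower x (3/4 + gam)) 0 (Rpower x (- (1/4))).

(* Main.v *)
Require Import Defs.
From Stdlib Require Import Reals Lra Nsatz Psatz Classical ClassicalEpsilon Cantor ZArith.
Open Scope R_scope.


Definition msub (g h : mat2) : mat2 := M2 (ma g - ma h) (mb g - mb h) (mc g - mc h) (md g - md h).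

Lemma mdist_msub g h : mdist g h = mnorm (msub g h).
Proof. reflexivity. Qed.

Lemma mnorm_ge0 X : 0 <= mnorm X.
Proof. destruct X as [a b c d]; unfold mnorm; simpl.
  pose proof (Rabs_pos a); pose proof (Rabs_pos b); pose proof (Rabs_pos c); pose proof (Rabs_pos d); lra. Qed.

Lemma abs2 x1 y1 x2 y2 : Rabs (x1*y1 + x2*y2) <= Rabs x1 * Rabs y1 + Rabs x2 * Rabs y2.
Proof. rewrite <- !Rabs_mult. apply Rabs_triang. Qed.

Lemma mnorm_mul X Y : mnorm (mmul X Y) <= mnorm X * mnorm Y.
Proof. destruct X as [a b c d], Y as [e f g h]; unfold mnorm, mmul; simpl.
  pose proof (abs2 a e b g); pose proof (abs2 a f b h); pose proof (abs2 c e d g); pose proof (abs2 c f d h).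
  pose proof (Rabs_pos a); pose proof (Rabs_pos b); pose proof (Rabs_pos c); pose proof (Rabs_pos d).
  pose proof (Rabs_pos e); pose proof (Rabs_pos f); pose proof (Rabs_pos g); pose proof (Rabs_pos h).
  nra. Qed.

Ltac meq := repeat match goal with X : mat2 |- _ => destruct X end;
  unfold mmul, minv, mid, mneg, mdet, u in *; simpl in *; f_equal.

Lemma mmul_assoc X Y Z : mmul X (mmul Y Z) = mmul (mmul X Y) Z.
Proof. meq; ring. Qed.
Lemma mmul_minv_l X : mdet X = 1 -> mmul (minv X) X = mid.
Proof. intro H. meq; nra. Qed.
Lemma mmul_minv_r X : mdet X = 1 -> mmul X (minv X) = mid.
Proof. intro H. meq; nra. Qed.
Lemma mmul_mid_l X : mmul mid X = X.
Proof. meq; ring. Qed.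
Lemma mmul_mid_r X : mmul X mid = X.
Proof. meq; ring. Qed.
Lemma minv_mmul X Y : minv (mmul X Y) = mmul (minv Y) (minv X).
Proof. meq; ring. Qed.
Lemma mdet_mmul X Y : mdet (mmul X Y) = mdet X * mdet Y.
Proof. destruct X, Y; unfold mdet, mmul; simpl; ring. Qed.
Lemma mdet_minv X : mdet (minv X) = mdet X.
Proof. unfold mdet, minv; simpl; ring. Qed.
Lemma mapply_mmul X Y v : mapply (mmul X Y) v = mapply X (mapply Y v).
Proof. destruct X, Y, v; unfold mapply, mmul; simpl; f_equal; ring. Qed.

Definition cj (s X : mat2) := mmul s (mmul X (minv s)).
Definition Gp (Gam : mat2 -> Prop) (s X : mat2) := Gam (cj s X).

Lemma cj_mul s X Y : mdet s = 1 -> cj s (mmul X Y) = mmul (cj s X) (cj s Y).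
Proof. intro H. unfold cj. meq; nsatz. Qed.

Lemma cj_inv s X : cj s (minv X) = minv (cj s X).
Proof. unfold cj. meq; ring. Qed.

Lemma cj_back s X : mdet s = 1 -> cj (minv s) (cj s X) = X.
Proof. intro H. unfold cj. meq; nsatz. Qed.

Lemma cj_mid s : mdet s = 1 -> cj s mid = mid.
Proof. intro H. unfold cj. rewrite mmul_mid_l. apply mmul_minv_r; auto. Qed.

Lemma mdet_conj s X : mdet (cj s X) = mdet s * mdet X * mdet s.
Proof. unfold cj. rewrite !mdet_mmul, mdet_minv. ring. Qed.

Section G.
Variable Gam : mat2 -> Prop.
Hypothesis HG : subgroup_G Gam.
Variable s : mat2.
Hypothesis Hs : mdet s = 1.

Lemma Gp_mul X Y : Gp Gam s X -> Gp Gam s Y -> Gp Gam s (mmul X Y).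
Proof. unfold Gp. rewrite cj_mul by auto. destruct HG as (_&_&_&Hm&_). auto. Qed.
Lemma Gp_inv X : Gp Gam s X -> Gp Gam s (minv X).
Proof. unfold Gp. rewrite cj_inv. destruct HG as (_&_&_&_&Hi). auto. Qed.
Lemma Gp_det X : Gp Gam s X -> mdet X = 1.
Proof. unfold Gp. intro H. destruct HG as (Hd&_). apply Hd in H. unfold in_G in H.
  rewrite mdet_conj, Hs in H. lra. Qed.
End G.

Lemma cj_sub_id s Z t : mdet s = 1 ->
  msub (cj s (mmul Z (minv (u t)))) mid = mmul s (mmul (mmul (msub Z (u t)) (minv (u t))) (minv s)).
Proof. intro H. unfold cj, msub. meq; nsatz. Qed.

Lemma cj_mneg s : mdet s = 1 -> cj (minv s) (mneg mid) = mneg mid.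
Proof. intro H. unfold cj. meq; nsatz. Qed.


Fixpoint Aseq (Y T : mat2) (n : nat) : mat2 :=
  match n with O => Y | S n => mmul (mmul (Aseq Y T n) T) (minv (Aseq Y T n)) end.

Lemma pow_le1 q n : 0 <= q <= 1 -> q ^ n <= 1.
Proof. intro H. rewrite <- (pow1 n). apply pow_incr; lra. Qed.

Lemma pow_ge0 q n : 0 <= q -> 0 <= q ^ n.
Proof. intro; apply pow_le; auto. Qed.

Lemma pow_le_shift q n k : 0 <= q <= 1 -> q ^ (k + n) <= q ^ n.
Proof. intro H. rewrite pow_add. pose proof (pow_le1 q k H). pose proof (pow_ge0 q n (proj1 H)). nra. Qed.

Lemma shimizu Gam s t Y : subgroup_G Gam -> discrete_G Gam -> mdet s = 1 ->
  Gp Gam s (u t) -> t <> 0 -> Gp Gam s Y -> mc Y <> 0 -> 1 <= Rabs (mc Y * t).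
Proof.
  intros HG HD Hs Hu Ht HY Hc.
  set (A := Aseq Y (u t)).
  assert (HA : forall n, Gp Gam s (A n)).
  { induction n; simpl; auto. apply Gp_mul; auto. apply Gp_mul; auto. apply Gp_inv; auto. }
  assert (Hdet : forall n, mdet (A n) = 1) by (intro; eapply Gp_det; eauto).
  assert (Ea : forall n, ma (A (S n)) = 1 - ma (A n) * (mc (A n) * t)).
  { intro n. pose proof (Hdet n). simpl. fold (A n). destruct (A n); unfold mdet in *; simpl in *. nsatz. }
  assert (Eb : forall n, mb (A (S n)) = ma (A n) ^ 2 * t).
  { intro n. simpl. fold (A n). destruct (A n); simpl. ring. }
  assert (Ec : forall n, mc (A (S n)) * t = - (mc (A n) * t) ^ 2).
  { intro n. simpl. fold (A n). destruct (A n); simpl. ring. }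
  assert (Ed : forall n, md (A (S n)) = 1 + ma (A n) * (mc (A n) * t)).
  { intro n. pose proof (Hdet n). simpl. fold (A n). destruct (A n); unfold mdet in *; simpl in *. nsatz. }
  destruct (Rle_lt_dec 1 (Rabs (mc Y * t))) as [Hq|Hq]; auto. exfalso.
  set (q := Rabs (mc Y * t)) in *.
  assert (q0 : 0 <= q) by apply Rabs_pos.
  assert (Hcn : forall n, Rabs (mc (A n) * t) <= q ^ (S n)).
  { induction n. simpl. unfold q. replace (A 0%nat) with Y by reflexivity. lra.
    rewrite Ec, Rabs_Ropp, <- RPow_abs. simpl.
    pose proof (Rabs_pos (mc (A n) * t)).
    pose proof (pow_le1 q n (conj q0 (Rlt_le _ _ Hq))).
    pose proof (pow_ge0 q n q0). simpl in IHn.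
    set (c := Rabs (mc (A n) * t)) in *. set (r := q ^ n) in *.
    assert (c * c <= (q * r) * (q * r)) by (apply Rmult_le_compat; lra).
    assert (q * r * (q * r) <= q * (q * r)).
    { assert (0 <= q*q*r) by (apply Rmult_le_pos; [nra|lra]).
      replace (q * r * (q * r)) with ((q*q*r)*r) by ring. replace (q * (q * r)) with ((q*q*r)*1) by ring.
      apply Rmult_le_compat_l; lra. }
    nra. }
  assert (Hcnz : forall n, mc (A n) <> 0).
  { induction n. exact Hc. intro E. pose proof (Ec n). rewrite E in H.
    apply IHn. assert (mc (A n) * t = 0) by nra. apply Rmult_integral in H0. tauto. }
  set (M := Rmax (Rabs (ma Y)) (/ (1 - q))).
  assert (HM1 : M * (1 - q) >= 1).
  { assert (/(1-q) <= M) by apply Rmax_r. assert (0 < 1 - q) by lra.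
    assert (/(1-q) * (1-q) = 1) by (field; lra). nra. }
  assert (HMa : forall n, Rabs (ma (A n)) <= M).
  { induction n. apply Rmax_l. rewrite Ea.
    eapply Rle_trans. apply Rabs_triang. rewrite Rabs_Ropp, Rabs_mult, Rabs_R1.
    pose proof (Hcn n). pose proof (Rabs_pos (ma (A n))). pose proof (Rabs_pos (mc (A n) * t)).
    assert (q ^ (S n) <= q). { simpl. pose proof (pow_le1 q n (conj q0 (Rlt_le _ _ Hq))). nra. }
    nra. }
  assert (HM0 : 0 <= M) by (eapply Rle_trans; [apply Rabs_pos | apply HMa with (n := 0%nat)]).
  assert (Hqq : 0 <= q <= 1) by lra.
  set (K := 2 * M + Rabs t * M * (M + 1) + / Rabs t).
  assert (Hat : 0 < Rabs t) by (apply Rabs_pos_lt; auto).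
  assert (HK : forall n, mnorm (msub (A (S (S n))) (u t)) <= K * q ^ n).
  { intro n. unfold mnorm, msub, u; cbn [ma mb mc md].
    rewrite Ea, Eb, Ed.
    assert (E1 : Rabs (1 - ma (A (S n)) * (mc (A (S n)) * t) - 1) <= M * q ^ n).
    { replace (1 - ma (A (S n)) * (mc (A (S n)) * t) - 1) with (- (ma (A (S n)) * (mc (A (S n)) * t))) by ring.
      rewrite Rabs_Ropp, Rabs_mult. pose proof (Hcn (S n)). pose proof (pow_le_shift q n 2 Hqq).
      pose proof (HMa (S n)). pose proof (Rabs_pos (ma (A (S n)))). pose proof (Rabs_pos (mc (A (S n)) * t)).
      simpl (2 + n)%nat in *. nra. }
    assert (E4 : Rabs (1 + ma (A (S n)) * (mc (A (S n)) * t) - 1) <= M * q ^ n).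
    { replace (1 + ma (A (S n)) * (mc (A (S n)) * t) - 1) with (- - (ma (A (S n)) * (mc (A (S n)) * t))) by ring.
      rewrite Rabs_Ropp. replace (1 - ma (A (S n)) * (mc (A (S n)) * t) - 1) with (- (ma (A (S n)) * (mc (A (S n)) * t))) in E1 by ring. exact E1. }
    assert (E3 : Rabs (mc (A (S (S n))) - 0) <= / Rabs t * q ^ n).
    { rewrite Rminus_0_r. pose proof (Hcn (S (S n))). rewrite Rabs_mult in H.
      pose proof (pow_le_shift q n 3 Hqq). simpl (3+n)%nat in H0.
      assert (Rabs (mc (A (S (S n)))) = Rabs (mc (A (S (S n)))) * Rabs t * / Rabs t) by (field; lra).
      rewrite H1. pose proof (Rinv_0_lt_compat _ Hat). nra. }
    assert (E2 : Rabs (ma (A (S n)) ^ 2 * t - t) <= Rabs t * M * (M + 1) * q ^ n).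
    { replace (ma (A (S n)) ^ 2 * t - t) with (t * ((ma (A (S n)) - 1) * (ma (A (S n)) + 1))) by ring.
      rewrite !Rabs_mult.
      assert (Hm1 : Rabs (ma (A (S n)) - 1) <= M * q ^ n).
      { rewrite Ea. replace (1 - ma (A n) * (mc (A n) * t) - 1) with (- (ma (A n) * (mc (A n) * t))) by ring.
        rewrite Rabs_Ropp, Rabs_mult.
        pose proof (Hcn n). pose proof (pow_le_shift q n 1 Hqq). simpl (1+n)%nat in H0.
        pose proof (HMa n). pose proof (Rabs_pos (ma (A n))). pose proof (Rabs_pos (mc (A n) * t)).
        apply Rle_trans with (M * q ^ S n). apply Rmult_le_compat; auto. simpl in H0 |- *. nra. }
      assert (Rabs (ma (A (S n)) + 1) <= M + 1).
      { eapply Rle_trans. apply Rabs_triang. rewrite Rabs_R1. pose proof (HMa (S n)). lra. }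
      pose proof (Rabs_pos (ma (A (S n)) + 1)). pose proof (Rabs_pos (ma (A (S n)) - 1)).
      pose proof (pow_ge0 q n q0).
      assert (Rabs (ma (A (S n)) - 1) * Rabs (ma (A (S n)) + 1) <= M * q ^ n * (M + 1)) by (apply Rmult_le_compat; auto).
      pose proof (Rabs_pos t). nra. }
    unfold K. pose proof (pow_ge0 q n q0). nra. }
  destruct HD as [d [Hd HD]].
  set (U := u t).
  set (Ks := mnorm s * mnorm (minv U) * mnorm (minv s)).
  assert (HKs : 0 <= Ks) by (unfold Ks; repeat apply Rmult_le_pos; apply mnorm_ge0).
  assert (HK0 : 0 <= K).
  { unfold K. pose proof (Rinv_0_lt_compat _ Hat). nra. }
  destruct (pow_lt_1_zero q ltac:(rewrite Rabs_right; lra) (d / (Ks * K + 1))) as [N HN].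
  { apply Rdiv_lt_0_compat; nra. }
  specialize (HN N (le_n _)). rewrite Rabs_right in HN by (apply Rle_ge, pow_ge0; auto).
  set (B := mmul (A (S (S N))) (minv U)).
  assert (HB : Gp Gam s B) by (apply Gp_mul; auto; apply Gp_inv; auto).
  assert (Hdist : mdist (cj s B) mid < d).
  { rewrite mdist_msub.
    assert (msub (cj s B) mid = mmul s (mmul (mmul (msub (A (S (S N))) U) (minv U)) (minv s))).
    { unfold B, U. apply cj_sub_id; auto. }
    rewrite H. eapply Rle_lt_trans. apply mnorm_mul. eapply Rle_lt_trans.
    apply Rmult_le_compat_l. apply mnorm_ge0. apply mnorm_mul.
    eapply Rle_lt_trans. apply Rmult_le_compat_l. apply mnorm_ge0.
    apply Rmult_le_compat_r. apply mnorm_ge0. apply mnorm_mul.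
    pose proof (HK N). pose proof (mnorm_ge0 s); pose proof (mnorm_ge0 (minv U)); pose proof (mnorm_ge0 (minv s)).
    pose proof (mnorm_ge0 (msub (A (S (S N))) U)).
    assert (mnorm s * (mnorm (msub (A (S (S N))) U) * mnorm (minv U) * mnorm (minv s)) <= Ks * (K * q ^ N)).
    { replace (mnorm s * (mnorm (msub (A (S (S N))) U) * mnorm (minv U) * mnorm (minv s))) with (Ks * mnorm (msub (A (S (S N))) U)) by (unfold Ks; ring).
      apply Rmult_le_compat_l; auto. }
    assert (Ks * (K * q ^ N) <= (Ks * K + 1) * q ^ N) by (pose proof (pow_ge0 q N q0); nra).
    assert ((Ks * K + 1) * q ^ N < d).
    { assert ((Ks * K + 1) * (d / (Ks * K + 1)) = d) by (field; nra). nra. }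
    lra. }
  assert (HBm : B = mid \/ B = mneg mid).
  { destruct (HD _ HB Hdist) as [E|E].
    - left. rewrite <- (cj_back s B Hs), E. apply cj_mid. rewrite mdet_minv. auto.
    - right. rewrite <- (cj_back s B Hs), E. apply cj_mneg; auto. }
  apply (Hcnz (S (S N))).
  assert (mc B = mc (A (S (S N)))). { unfold B, U. destruct (A (S (S N))); simpl. ring. }
  rewrite <- H. destruct HBm as [E|E]; rewrite E; simpl; ring.
Qed.


Lemma iter_contra Gam s t0 rho : t0 <> 0 ->
  (exists d, 0 < d /\ forall r, Gp Gam s (u r) -> 0 < Rabs r < d -> False) ->
  Gp Gam s (u t0) -> 0 < rho < 1 -> (forall r, Gp Gam s (u r) -> Gp Gam s (u (rho * r))) -> False.
Proof.
  intros Ht [d [Hd HL]] H0 Hr Hit.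
  assert (Hn : forall n, Gp Gam s (u (rho ^ n * t0))).
  { induction n. simpl. rewrite Rmult_1_l. auto. simpl. rewrite Rmult_assoc. auto. }
  assert (Hat : 0 < Rabs t0) by (apply Rabs_pos_lt; auto).
  destruct (pow_lt_1_zero rho ltac:(rewrite Rabs_right; lra) (d / Rabs t0)) as [N HN].
  { apply Rdiv_lt_0_compat; lra. }
  specialize (HN N (le_n _)).
  apply (HL _ (Hn N)). rewrite Rabs_mult. split.
  - apply Rmult_lt_0_compat; auto. apply Rabs_pos_lt. apply pow_nonzero. lra.
  - assert (d / Rabs t0 * Rabs t0 = d) by (field; lra). pose proof (Rabs_pos (rho ^ N)). nra.
Qed.

Lemma par Gam s t0 Y : subgroup_G Gam -> mdet s = 1 -> t0 <> 0 ->
  (exists d, 0 < d /\ forall r, Gp Gam s (u r) -> 0 < Rabs r < d -> False) ->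
  Gp Gam s (u t0) -> Gp Gam s Y -> mc Y = 0 -> ma Y = 1 \/ ma Y = -1.
Proof.
  intros HG Hs Ht HL H0 HY Hc.
  pose proof (Gp_det Gam HG s Hs Y HY) as HdY.
  destruct Y as [a b c d]; simpl in Hc; subst c. unfold mdet in HdY; simpl in HdY.
  assert (Ha : a <> 0) by (intro E; subst; lra).
  assert (C1 : forall r, Gp Gam s (u r) -> Gp Gam s (u (a ^ 2 * r))).
  { intros r Hr. assert (u (a^2 * r) = mmul (mmul (M2 a b 0 d) (u r)) (minv (M2 a b 0 d))).
    { clear - HdY. unfold u, mmul, minv; simpl; f_equal; nsatz. }
    rewrite H. apply Gp_mul; auto. apply Gp_mul; auto. apply Gp_inv; auto. }
  assert (C2 : forall r, Gp Gam s (u r) -> Gp Gam s (u (d ^ 2 * r))).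
  { intros r Hr. assert (u (d^2 * r) = mmul (mmul (minv (M2 a b 0 d)) (u r)) (M2 a b 0 d)).
    { clear - HdY. unfold u, mmul, minv; simpl; f_equal; nsatz. }
    rewrite H. apply Gp_mul; auto. apply Gp_mul; auto. apply Gp_inv; auto. }
  simpl. destruct (Rtotal_order (Rabs a) 1) as [Hlt|[Heq|Hgt]].
  - exfalso. apply (iter_contra Gam s t0 (a ^ 2)); auto.
    rewrite <- Rsqr_pow2. rewrite Rsqr_abs. pose proof (Rabs_pos_lt a Ha). unfold Rsqr. nra.
  - unfold Rabs in Heq. destruct (Rcase_abs a); lra.
  - exfalso. apply (iter_contra Gam s t0 (d ^ 2)); auto.
    assert (Hd : Rabs a * Rabs d = 1) by (rewrite <- Rabs_mult; replace (a*d) with 1 by lra; apply Rabs_R1).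
    rewrite <- Rsqr_pow2. rewrite Rsqr_abs. pose proof (Rabs_pos d). unfold Rsqr.
    assert (0 < Rabs d) by nra. assert (Rabs d < 1) by nra. nra.
Qed.

Definition Wv (p s h : mat2) : R * R := mapply (minv (mmul h p)) (ma s, mc s).
Definition det2 (w w' : R * R) := fst w * snd w' - fst w' * snd w.

Lemma sep Gam s p t0 h h' : subgroup_G Gam -> discrete_G Gam -> mdet s = 1 -> in_G p ->
  t0 <> 0 ->
  (exists d, 0 < d /\ forall r, Gp Gam s (u r) -> 0 < Rabs r < d -> False) ->
  Gp Gam s (u t0) -> Gam h -> Gam h' ->
  1 <= Rabs (det2 (Wv p s h) (Wv p s h') * t0) \/
  Wv p s h' = Wv p s h \/ Wv p s h' = (- fst (Wv p s h), - snd (Wv p s h)).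
Proof.
  intros HG HD Hs Hp Ht HL H0 Hh Hh'.
  assert (Hdh : mdet h = 1) by (destruct HG as (Hd&_); apply Hd; auto).
  assert (Hdh' : mdet h' = 1) by (destruct HG as (Hd&_); apply Hd; auto).
  unfold in_G in Hp.
  set (Y := mmul (minv s) (mmul (mmul h (minv h')) s)).
  assert (HY : Gp Gam s Y).
  { unfold Gp. assert (cj s Y = mmul h (minv h')).
    { unfold Y, cj. clear - Hs. meq; nsatz. }
    rewrite H. destruct HG as (_&_&_&Hm&Hi). auto. }
  set (A := mmul (minv (mmul h p)) s).
  assert (HAY : mmul A Y = mmul (minv (mmul h' p)) s).
  { unfold A, Y. rewrite !minv_mmul. rewrite !mmul_assoc.
    rewrite <- (mmul_assoc (mmul (minv p) (minv h)) s (minv s)). rewrite mmul_minv_r by auto.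
    rewrite mmul_mid_r. rewrite <- (mmul_assoc (minv p) (minv h) h). rewrite mmul_minv_l by auto.
    rewrite mmul_mid_r. reflexivity. }
  assert (Ew : Wv p s h = mapply A (1, 0)).
  { unfold Wv, A. rewrite mapply_mmul. unfold mapply; simpl. f_equal; f_equal; ring. }
  assert (Ew' : Wv p s h' = mapply A (ma Y, mc Y)).
  { unfold Wv. transitivity (mapply (mmul (minv (mmul h' p)) s) (1, 0)).
    { rewrite mapply_mmul. replace (mapply s (1, 0)) with (ma s, mc s) by (unfold mapply; simpl; f_equal; ring). reflexivity. }
    rewrite <- HAY. rewrite mapply_mmul. f_equal. unfold mapply; simpl. f_equal; ring. }
  assert (HdA : mdet A = 1) by (unfold A; rewrite mdet_mmul, mdet_minv, mdet_mmul; rewrite Hdh, Hp, Hs; ring).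
  assert (Edet : det2 (Wv p s h) (Wv p s h') = mc Y).
  { rewrite Ew, Ew'. unfold det2, mapply. clear - HdA. destruct A; unfold mdet in HdA; simpl in *. nsatz. }
  destruct (Req_dec (mc Y) 0) as [Hc|Hc].
  - right. destruct (par Gam s t0 Y HG Hs Ht HL H0 HY Hc) as [E|E];
      rewrite Ew, Ew', E, Hc; unfold mapply; simpl; [left|right]; f_equal; ring.
  - left. rewrite Edet. apply (shimizu Gam s t0 Y); auto.
Qed.


Lemma pw_pos x y : 0 < Rpower x y.
Proof. unfold Rpower. apply exp_pos. Qed.

Lemma pw_le1 x e : 1 <= x -> e <= 0 -> Rpower x e <= 1.
Proof. intros. rewrite <- (Rpower_O x) by lra. apply Rle_Rpower; lra. Qed.

Lemma pw_ge1 x e : 1 <= x -> 0 <= e -> 1 <= Rpower x e.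
Proof. intros. rewrite <- (Rpower_O x) by lra. apply Rle_Rpower; lra. Qed.

Lemma pw_add x a b : Rpower x a * Rpower x b = Rpower x (a + b).
Proof. rewrite Rpower_plus. ring. Qed.

Lemma pw_mono x y c : 0 <= c -> 0 < x <= y -> Rpower x c <= Rpower y c.
Proof. intros. apply Rle_Rpower_l; auto. Qed.

Lemma pw2 c : 0 <= c <= 1 -> Rpower 2 c <= 2.
Proof. intros. rewrite <- (Rpower_1 2) at 2 by lra. apply Rle_Rpower; lra. Qed.

Lemma pw_2x x c : 0 < x -> 0 <= c <= 1 -> Rpower (2 * x) c <= 2 * Rpower x c.
Proof. intros. rewrite <- Rpower_mult_distr by lra. pose proof (pw2 c H0). pose proof (pw_pos x c). nra. Qed.

Lemma pw_1g x g : 0 < x -> Rpower x (1 + g) = x * Rpower x g.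
Proof. intros. rewrite Rpower_plus, Rpower_1 by auto. ring. Qed.

Lemma P1 x y g : 0 < x <= y -> 0 <= g -> Rpower y (1 + g) - Rpower x (1 + g) >= Rpower x g * (y - x).
Proof. intros. rewrite !pw_1g by lra. pose proof (pw_mono x y g H0 H). nra. Qed.

Lemma P2 x y g : 0 < x <= y -> 0 <= g <= 1 -> Rpower y (1 + g) - Rpower x (1 + g) <= 2 * Rpower y g * (y - x).
Proof. intros. rewrite !pw_1g by lra.
  assert (Hx : x = Rpower x (1 - g) * Rpower x g) by (rewrite pw_add; replace (1 - g + g) with 1 by ring; rewrite Rpower_1; lra).
  assert (Hy : y = Rpower y (1 - g) * Rpower y g) by (rewrite pw_add; replace (1 - g + g) with 1 by ring; rewrite Rpower_1; lra).
  assert (H1 : Rpower x (1 - g) <= Rpower y (1 - g)) by (apply pw_mono; lra).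
  assert (H2 : Rpower x g <= Rpower y g) by (apply pw_mono; lra).
  assert (H3 : x * Rpower y g <= Rpower x g * y).
  { rewrite Hx at 1. rewrite Hy at 2. pose proof (pw_pos x g). pose proof (pw_pos y g).
    pose proof (pw_pos x (1-g)). 
    replace (Rpower x (1 - g) * Rpower x g * Rpower y g) with ((Rpower x g * Rpower y g) * Rpower x (1-g)) by ring.
    replace (Rpower x g * (Rpower y (1 - g) * Rpower y g)) with ((Rpower x g * Rpower y g) * Rpower y (1-g)) by ring.
    apply Rmult_le_compat_l; nra. }
  pose proof (pw_pos x g). nra. Qed.


Section An.
Variables (kap gam eps T mu nu c0 : R) (inW : R * R -> Prop).
Hypothesis Hkap : 0 < kap.
Let al := 1 / (kap + 4).
Hypothesis Hgam : 0 < gam < al.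
Hypothesis Heps : 0 < eps <= 1.
Hypothesis Hmu : eps < mu.
Hypothesis Hnu : 0 < nu.
Hypothesis Hdio : forall w, inW w -> mu <= Rabs (snd w) \/ nu <= rpow (Rabs (fst w)) kap * Rabs (snd w).

Definition C1 := Rpower 2 kap / nu + 1.

Definition bad (w : R * R) (x : R) : Prop :=
  inW w /\ 1 <= x <= T /\ Rabs (snd w) <= eps * Rpower x (al - 1/2) /\
  Rabs (fst w - Rpower x (1 + gam) * snd w) <= eps * Rpower x al.

Definition RR (w : R * R) (x : R) := Rpower x (al - gam) / Rabs (snd w).

Lemma al_facts : 0 < al /\ al <= 1/4 /\ al * (kap + 1) <= 1.
Proof. unfold al. split; [|split].
  - apply Rdiv_lt_0_compat; lra.
  - apply Rmult_le_reg_r with (4 * (kap + 4)). lra. field_simplify; lra.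
  - unfold Rdiv. rewrite Rmult_1_l. apply Rmult_le_reg_r with (kap + 4). lra.
    field_simplify; lra. Qed.

Lemma C1_facts : 1 <= C1 /\ Rpower 2 kap / C1 < nu.
Proof. pose proof (pw_pos 2 kap). unfold C1.
  assert (0 <= Rpower 2 kap / nu) by (unfold Rdiv; apply Rmult_le_pos; [lra | apply Rlt_le, Rinv_0_lt_compat; lra]).
  split. lra.
  apply Rmult_lt_reg_r with (Rpower 2 kap / nu + 1). lra.
  unfold Rdiv at 1. rewrite Rmult_assoc, Rinv_l, Rmult_1_r by lra.
  assert (nu * (Rpower 2 kap / nu + 1) = Rpower 2 kap + nu) by (field; lra). lra.
Qed.

Lemma lowb w x : bad w x -> Rpower x (al - gam - 1) / C1 <= Rabs (snd w).
Proof.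
  intros (HW & Hx & Hb & He).
  destruct al_facts as (Hal0 & Hal1 & Hal2). destruct C1_facts as (HC1 & HC2).
  set (a := fst w) in *. set (b := snd w) in *. set (p := Rpower x (1 + gam)) in *.
  assert (Hb1 : Rabs b < mu).
  { pose proof (pw_le1 x (al - 1/2) (proj1 Hx) ltac:(lra)). nra. }
  destruct (Hdio w HW) as [H|H]. fold b in H. lra. fold a b in H.
  destruct (Rle_lt_dec (Rpower x (al - gam - 1) / C1) (Rabs b)) as [Hc|Hc]; auto. exfalso.
  assert (Hpx : p * Rpower x (al - gam - 1) = Rpower x al).
  { unfold p. rewrite pw_add. f_equal. ring. }
  assert (Hp0 : 0 < p) by apply pw_pos.
  assert (HxA : 0 < Rpower x al) by apply pw_pos.
  assert (Ha : Rabs a <= 2 * Rpower x al).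
  { replace a with ((a - p * b) + p * b) by ring.
    eapply Rle_trans. apply Rabs_triang. rewrite Rabs_mult, (Rabs_right p) by lra.
    assert (p * Rabs b <= p * (Rpower x (al - gam - 1) / C1)) by (apply Rmult_le_compat_l; lra).
    assert (p * (Rpower x (al - gam - 1) / C1) = Rpower x al / C1) by (unfold Rdiv; rewrite <- Rmult_assoc, Hpx; ring).
    assert (Rpower x al / C1 <= Rpower x al).
    { unfold Rdiv. pose proof (Rinv_le_contravar 1 C1 ltac:(lra) HC1) as HH. rewrite Rinv_1 in HH. assert (0 < / C1) by (apply Rinv_0_lt_compat; lra). nra. }
    nra. }
  unfold rpow in H. destruct (Req_EM_T (Rabs a) 0) as [E|E]. lra.
  assert (Hak : Rpower (Rabs a) kap <= Rpower 2 kap * Rpower x (al * kap)).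
  { rewrite <- Rpower_mult, Rpower_mult_distr by (try lra; apply pw_pos).
    apply pw_mono. lra. split. pose proof (Rabs_pos a). lra. exact Ha. }
  assert (Hexp : Rpower x (al * kap) * Rpower x (al - gam - 1) <= 1).
  { rewrite pw_add. apply pw_le1. lra. nra. }
  assert (Hk0 : 0 < Rpower (Rabs a) kap) by apply pw_pos.
  assert (nu < Rpower 2 kap * Rpower x (al * kap) * (Rpower x (al - gam - 1) / C1)).
  { eapply Rle_lt_trans. exact H. apply Rle_lt_trans with (Rpower 2 kap * Rpower x (al * kap) * Rabs b).
    apply Rmult_le_compat_r. apply Rabs_pos. auto.
    apply Rmult_lt_compat_l. pose proof (pw_pos 2 kap); pose proof (pw_pos x (al*kap)); nra. auto. }
  assert (Rpower 2 kap * Rpower x (al * kap) * (Rpower x (al - gam - 1) / C1) <= Rpower 2 kap / C1).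
  { unfold Rdiv. pose proof (pw_pos 2 kap). assert (0 < / C1) by (apply Rinv_0_lt_compat; lra).
    replace (Rpower 2 kap * Rpower x (al * kap) * (Rpower x (al - gam - 1) * / C1)) with
      ((Rpower 2 kap * / C1) * (Rpower x (al * kap) * Rpower x (al - gam - 1))) by ring.
    rewrite <- (Rmult_1_r (Rpower 2 kap * / C1)) at 2. apply Rmult_le_compat_l; nra. }
  lra.
Qed.

Lemma RR_le w x : bad w x -> RR w x <= C1 * x /\ 0 < Rabs (snd w) /\ 0 < RR w x.
Proof.
  intro H. pose proof (lowb w x H) as Hl. destruct H as (_ & Hx & _).
  destruct C1_facts as (HC1 & _).
  assert (0 < Rpower x (al - gam - 1) / C1) by (apply Rdiv_lt_0_compat; [apply pw_pos | lra]).
  assert (Hb : 0 < Rabs (snd w)) by lra.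
  unfold RR. split; [|split].
  - assert (Rpower x (al - gam) = Rpower x (al - gam - 1) * x) by
      (replace (al - gam) with ((al - gam - 1) + 1) at 1 by ring; rewrite Rpower_plus, Rpower_1 by lra; ring).
    rewrite H0. apply Rmult_le_reg_r with (Rabs (snd w)). auto.
    unfold Rdiv. rewrite Rmult_assoc, Rinv_l, Rmult_1_r by lra.
    assert (Rpower x (al - gam - 1) <= C1 * Rabs (snd w)).
    { apply Rmult_le_reg_r with (/ C1). apply Rinv_0_lt_compat; lra.
      replace (C1 * Rabs (snd w) * / C1) with (Rabs (snd w)) by (field; lra). exact Hl. }
    nra.
  - auto.
  - apply Rdiv_lt_0_compat; auto. apply pw_pos.
Qed.

Definition lam := / (4 * C1).

Lemma detb w x w' x' z : bad w x -> bad w' x' ->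
  Rabs (z - x) <= lam * RR w x -> Rabs (z - x') <= lam * RR w' x' ->
  Rabs (fst w * snd w' - fst w' * snd w) <= 8 * eps.
Proof.
  intros Hw Hw' Hz Hz'.
  destruct (RR_le w x Hw) as (HR & Hb0 & HR0). destruct (RR_le w' x' Hw') as (HR' & Hb0' & HR0').
  destruct Hw as (_ & Hx & Hb & He). destruct Hw' as (_ & Hx' & Hb' & He').
  destruct al_facts as (Hal0 & Hal1 & Hal2). destruct C1_facts as (HC1 & _).
  assert (Hlam : 0 < lam /\ lam <= 1/4 /\ lam * C1 = 1/4).
  { unfold lam. split. apply Rinv_0_lt_compat; lra. split.
    apply Rmult_le_reg_r with (4 * C1). lra. rewrite Rinv_l by lra. lra. field; lra. }
  set (a := fst w) in *. set (b := snd w) in *. set (a' := fst w') in *. set (b' := snd w') in *.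
  set (p := Rpower x (1 + gam)) in *. set (p' := Rpower x' (1 + gam)) in *.
  assert (H1 : lam * RR w x <= x / 4) by nra.
  assert (H1' : lam * RR w' x' <= x' / 4) by nra.
  assert (Hxx : Rabs (x - x') <= lam * RR w x + lam * RR w' x').
  { replace (x - x') with ((z - x') - (z - x)) by ring. eapply Rle_trans. apply Rabs_triang.
    rewrite Rabs_Ropp. lra. }
  assert (Hc1 : x <= 2 * x' /\ x' <= 2 * x).
  { pose proof (Rle_abs (x - x')). pose proof (Rle_abs (- (x - x'))). rewrite Rabs_Ropp in H0. lra. }
  assert (Edet : a * b' - a' * b = (p - p') * b * b' + (a - p * b) * b' - (a' - p' * b') * b) by ring.
  set (G := Rpower (Rmax x x') gam).
  assert (Hgam1 : 0 <= gam <= 1) by lra.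
  assert (HG : Rabs (p - p') <= 2 * G * Rabs (x - x')).
  { unfold G, p, p', Rmax. destruct (Rle_dec x x') as [Hle|Hle].
    - pose proof (P1 x x' gam ltac:(lra) ltac:(lra)). pose proof (P2 x x' gam ltac:(lra) Hgam1).
      pose proof (pw_pos x gam). rewrite Rabs_left1 by nra. rewrite Rabs_left1 by lra. nra.
    - pose proof (P1 x' x gam ltac:(lra) ltac:(lra)). pose proof (P2 x' x gam ltac:(lra) Hgam1).
      pose proof (pw_pos x' gam). rewrite Rabs_right by nra. rewrite Rabs_right by lra. nra. }
  assert (HG1 : G <= 2 * Rpower x gam).
  { eapply Rle_trans. 2: apply pw_2x; lra. apply pw_mono. lra. split. unfold Rmax; destruct Rle_dec; lra.
    apply Rmax_lub; lra. }
  assert (HG2 : G <= 2 * Rpower x' gam).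
  { eapply Rle_trans. 2: apply pw_2x; lra. apply pw_mono. lra. split. unfold Rmax; destruct Rle_dec; lra.
    apply Rmax_lub; lra. }
  assert (HRb : RR w x * Rabs b = Rpower x (al - gam)) by (unfold RR; fold b; field; lra).
  assert (HRb' : RR w' x' * Rabs b' = Rpower x' (al - gam)) by (unfold RR; fold b'; field; lra).
  assert (Hga : Rpower x gam * Rpower x (al - gam) = Rpower x al) by (rewrite pw_add; f_equal; ring).
  assert (Hga' : Rpower x' gam * Rpower x' (al - gam) = Rpower x' al) by (rewrite pw_add; f_equal; ring).
  assert (Hxa : Rpower x al <= 2 * Rpower x' al).
  { eapply Rle_trans. 2: apply pw_2x; lra. apply pw_mono; lra. }
  assert (Hxa' : Rpower x' al <= 2 * Rpower x al).
  { eapply Rle_trans. 2: apply pw_2x; lra. apply pw_mono; lra. }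
  assert (Hq : Rpower x' al * Rpower x' (al - 1/2) <= 1) by (rewrite pw_add; apply pw_le1; lra).
  assert (Hq' : Rpower x al * Rpower x (al - 1/2) <= 1) by (rewrite pw_add; apply pw_le1; lra).
  assert (B1 : Rpower x al * Rabs b' <= 2 * eps).
  { pose proof (pw_pos x al). pose proof (pw_pos x' al). pose proof (pw_pos x' (al - 1/2)).
    apply Rle_trans with (2 * Rpower x' al * (eps * Rpower x' (al - 1/2))).
    apply Rmult_le_compat; try lra. nra. }
  assert (B2 : Rpower x' al * Rabs b <= 2 * eps).
  { pose proof (pw_pos x al). pose proof (pw_pos x' al). pose proof (pw_pos x (al - 1/2)).
    apply Rle_trans with (2 * Rpower x al * (eps * Rpower x (al - 1/2))).
    apply Rmult_le_compat; try lra. nra. }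
  assert (T1 : Rabs ((p - p') * b * b') <= 4 * eps).
  { rewrite !Rabs_mult.
    assert (HX : Rabs (x - x') * Rabs b * Rabs b' <= lam * (Rpower x (al - gam) * Rabs b' + Rpower x' (al - gam) * Rabs b)).
    { rewrite <- HRb, <- HRb'. pose proof (Rabs_pos b); pose proof (Rabs_pos b').
      assert (0 <= Rabs b * Rabs b') by nra.
      apply Rle_trans with ((lam * RR w x + lam * RR w' x') * (Rabs b * Rabs b')).
      rewrite Rmult_assoc. apply Rmult_le_compat_r; auto. nra. }
    pose proof (Rabs_pos b); pose proof (Rabs_pos b'). pose proof (Rabs_pos (x - x')).
    pose proof (pw_pos x (al - gam)). pose proof (pw_pos x' (al - gam)). pose proof (pw_pos (Rmax x x') gam).
    fold G in H5.
    assert (Rabs (p - p') * Rabs b * Rabs b' <= 2 * G * (Rabs (x - x') * Rabs b * Rabs b')).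
    { assert (0 <= Rabs b * Rabs b') by nra.
      replace (2 * G * (Rabs (x - x') * Rabs b * Rabs b')) with ((2 * G * Rabs (x - x')) * (Rabs b * Rabs b')) by ring.
      rewrite Rmult_assoc. apply Rmult_le_compat_r; auto. }
    assert (HY1 : G * Rpower x (al - gam) <= 2 * Rpower x al) by nra.
    assert (HY2 : G * Rpower x' (al - gam) <= 2 * Rpower x' al) by nra.
    assert (2 * G * (Rabs (x - x') * Rabs b * Rabs b') <= 2 * G * (lam * (Rpower x (al - gam) * Rabs b' + Rpower x' (al - gam) * Rabs b))).
    { apply Rmult_le_compat_l; [lra | exact HX]. }
    assert (2 * G * (lam * (Rpower x (al - gam) * Rabs b' + Rpower x' (al - gam) * Rabs b)) =
            2 * lam * ((G * Rpower x (al - gam)) * Rabs b' + (G * Rpower x' (al - gam)) * Rabs b)) by ring.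
    assert (HY3 : (G * Rpower x (al - gam)) * Rabs b' + (G * Rpower x' (al - gam)) * Rabs b <= 8 * eps).
    { apply Rle_trans with (2 * Rpower x al * Rabs b' + 2 * Rpower x' al * Rabs b).
      apply Rplus_le_compat; apply Rmult_le_compat_r; auto. lra. }
    assert (0 <= (G * Rpower x (al - gam)) * Rabs b' + (G * Rpower x' (al - gam)) * Rabs b) by
      (apply Rplus_le_le_0_compat; apply Rmult_le_pos; try apply Rmult_le_pos; lra).
    assert (2 * lam * ((G * Rpower x (al - gam)) * Rabs b' + (G * Rpower x' (al - gam)) * Rabs b) <= 2 * lam * (8 * eps))
      by (apply Rmult_le_compat_l; lra).
    assert (2 * lam * (8 * eps) <= 4 * eps) by nra.
    lra. }
  assert (T2 : Rabs ((a - p * b) * b') <= 2 * eps).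
  { rewrite Rabs_mult. pose proof (Rabs_pos b'). pose proof (Rabs_pos (a - p * b)).
    apply Rle_trans with (eps * Rpower x al * Rabs b'). apply Rmult_le_compat_r; auto. nra. }
  assert (T3 : Rabs ((a' - p' * b') * b) <= 2 * eps).
  { rewrite Rabs_mult. pose proof (Rabs_pos b). pose proof (Rabs_pos (a' - p' * b')).
    apply Rle_trans with (eps * Rpower x' al * Rabs b). apply Rmult_le_compat_r; auto. nra. }
  rewrite Edet. unfold Rminus at 1.
  eapply Rle_trans. apply Rabs_triang. rewrite Rabs_Ropp.
  eapply Rle_trans. apply Rplus_le_compat_r. apply Rabs_triang. lra.
Qed.

Lemma cmp_aux u v bb : 1 <= u -> 2 * u < v -> eps * (4 * C1) < 1 ->
  Rabs (Rpower u (1 + gam) - Rpower v (1 + gam)) * bb <= eps * (Rpower u al + Rpower v al) ->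
  Rpower v (al - gam - 1) / C1 <= bb -> False.
Proof.
  intros Hu Huv Hsm Hk Hl.
  destruct al_facts as (Hal0 & Hal1 & Hal2). destruct C1_facts as (HC1 & _).
  assert (Hp : Rpower u (1 + gam) = u * Rpower u gam) by (apply pw_1g; lra).
  assert (Hp' : Rpower v (1 + gam) = v * Rpower v gam) by (apply pw_1g; lra).
  set (p := Rpower u (1 + gam)) in *. set (p' := Rpower v (1 + gam)) in *.
  assert (Hpp' : p' * Rpower v (al - gam - 1) = Rpower v al) by (unfold p'; rewrite pw_add; f_equal; ring).
  assert (Rpower u gam <= Rpower v gam) by (apply pw_mono; lra).
  assert (p <= p' / 2) by (pose proof (pw_pos u gam); nra).
  assert (Hpa : 0 < p) by (unfold p; apply pw_pos).
  assert (Rabs (p - p') >= p' / 2) by (rewrite Rabs_left1; lra).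
  assert (Rpower u al <= Rpower v al) by (apply pw_mono; lra).
  assert (Hq0 : 0 < Rpower v (al - gam - 1) / C1) by (apply Rdiv_lt_0_compat; [apply pw_pos | lra]).
  assert (p' / 2 * (Rpower v (al - gam - 1) / C1) <= eps * (2 * Rpower v al)).
  { apply Rle_trans with (Rabs (p - p') * bb). assert (0 < p') by (unfold p'; apply pw_pos). apply Rmult_le_compat; lra. nra. }
  assert (p' / 2 * (Rpower v (al - gam - 1) / C1) = Rpower v al / (2 * C1)) by (rewrite <- Hpp'; field; lra).
  assert (HvA : 0 < Rpower v al) by apply pw_pos.
  assert (Rpower v al <= eps * (4 * C1) * Rpower v al).
  { apply Rmult_le_reg_r with (/ (2 * C1)). apply Rinv_0_lt_compat; lra.
    replace (eps * (4 * C1) * Rpower v al * / (2 * C1)) with (eps * (2 * Rpower v al)) by (field; lra).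
    unfold Rdiv in *. lra. }
  nra.
Qed.

Lemma closeb w x w' x' : bad w x -> bad w' x' -> eps * (4 * C1) < 1 ->
  (w' = w \/ w' = (- fst w, - snd w)) -> Rabs (x - x') <= 6 * eps * RR w x.
Proof.
  intros Hw Hw' Hsm Hpm.
  pose proof (lowb w x Hw) as Hl. pose proof (lowb w' x' Hw') as Hl'.
  destruct (RR_le w x Hw) as (HR & Hb0 & HR0).
  destruct Hw as (_ & Hx & Hb & He). destruct Hw' as (_ & Hx' & Hb' & He').
  destruct al_facts as (Hal0 & Hal1 & Hal2). destruct C1_facts as (HC1 & _).
  assert (Hbb : Rabs (snd w') = Rabs (snd w)) by (destruct Hpm as [E|E]; rewrite E; simpl; try rewrite Rabs_Ropp; auto).
  assert (He2 : Rabs (fst w - Rpower x' (1 + gam) * snd w) <= eps * Rpower x' al).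
  { destruct Hpm as [E|E]; rewrite E in He'; simpl in He'. auto.
    replace (- fst w - Rpower x' (1 + gam) * - snd w) with (- (fst w - Rpower x' (1 + gam) * snd w)) in He' by ring.
    rewrite Rabs_Ropp in He'. auto. }
  rewrite Hbb in Hl', Hb'. clear Hbb He' Hpm.
  set (a := fst w) in *. set (b := snd w) in *.
  assert (Hgam1 : 0 <= gam <= 1) by lra.
  assert (Hk : Rabs (Rpower x (1 + gam) - Rpower x' (1 + gam)) * Rabs b <= eps * (Rpower x al + Rpower x' al)).
  { rewrite <- Rabs_mult. replace ((Rpower x (1 + gam) - Rpower x' (1 + gam)) * b) with
      ((a - Rpower x' (1 + gam) * b) - (a - Rpower x (1 + gam) * b)) by ring.
    eapply Rle_trans. apply Rabs_triang. rewrite Rabs_Ropp. lra. }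
  assert (Hcmp : x' <= 2 * x /\ x <= 2 * x').
  { split; apply Rnot_lt_le; intro Hn.
    - apply (cmp_aux x x' (Rabs b)); auto. lra.
    - apply (cmp_aux x' x (Rabs b)); auto. lra. rewrite Rabs_minus_sym. lra. }
  set (p := Rpower x (1 + gam)) in *. set (p' := Rpower x' (1 + gam)) in *.
  assert (Hlow : Rpower x gam / 2 * Rabs (x - x') <= Rabs (p - p')).
  { destruct (Rle_dec x x') as [Hle|Hle].
    - pose proof (P1 x x' gam ltac:(lra) ltac:(lra)). pose proof (pw_pos x gam). fold p p' in H.
      rewrite Rabs_left1 by lra. rewrite Rabs_left1 by nra. nra.
    - pose proof (P1 x' x gam ltac:(lra) ltac:(lra)). pose proof (pw_pos x' gam). fold p p' in H.
      assert (Rpower x gam <= 2 * Rpower x' gam).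
      { eapply Rle_trans. 2: apply pw_2x; lra. apply pw_mono; lra. }
      rewrite Rabs_right by lra. rewrite Rabs_right by nra. pose proof (pw_pos x gam). nra. }
  assert (Hxa' : Rpower x' al <= 2 * Rpower x al).
  { eapply Rle_trans. 2: apply pw_2x; lra. apply pw_mono; lra. }
  assert (H3 : Rpower x gam / 2 * Rabs (x - x') * Rabs b <= 3 * eps * Rpower x al).
  { apply Rle_trans with (Rabs (p - p') * Rabs b). apply Rmult_le_compat_r. lra. auto.
    apply Rle_trans with (eps * (Rpower x al + Rpower x' al)). auto. nra. }
  assert (Hga : Rpower x gam * Rpower x (al - gam) = Rpower x al) by (rewrite pw_add; f_equal; ring).
  assert (HRb : RR w x * Rabs b = Rpower x (al - gam)) by (unfold RR; fold b; field; lra).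
  assert (Hxg : 0 < Rpower x gam) by apply pw_pos.
  apply Rmult_le_reg_r with (Rpower x gam / 2 * Rabs b). apply Rmult_lt_0_compat; lra.
  assert (E : 6 * eps * RR w x * (Rpower x gam / 2 * Rabs b) = 3 * eps * (Rpower x gam * (RR w x * Rabs b))) by (unfold Rdiv; field). rewrite E.
  rewrite HRb, Hga. lra.
Qed.
End An.


Lemma disj_sum N : forall (l r : nat -> R) A B, A <= B ->
  (forall i, (i <= N)%nat -> l i <= r i) ->
  (forall i, (i <= N)%nat -> l i < r i -> A <= l i /\ r i <= B) ->
  (forall i j, (i <= N)%nat -> (j <= N)%nat -> i <> j -> l i < r i -> l j < r j -> r i < l j \/ r j < l i) ->
  sum_f_R0 (fun i => r i - l i) N <= B - A.
Proof.
  induction N; intros l r A B HAB Hlr Hin Hdj.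
  - simpl. destruct (Rle_lt_or_eq_dec _ _ (Hlr 0%nat (le_n _))) as [H|H].
    + destruct (Hin 0%nat (le_n _) H). lra.
    + lra.
  - simpl. destruct (Rle_lt_or_eq_dec _ _ (Hlr (S N) (le_n _))) as [Hne|He].
    2: { assert (sum_f_R0 (fun i => r i - l i) N <= B - A); [|lra].
         apply IHN; auto. }
    set (L := l (S N)). set (Rr := r (S N)).
    destruct (Hin (S N) (le_n _) Hne) as [HA HB]. fold L Rr in HA, HB, Hne.
    set (t i := if Rle_dec (r i) L then true else false).
    set (lL i := if t i then l i else A). set (rL i := if t i then r i else A).
    set (lR i := if t i then B else l i). set (rR i := if t i then B else r i).
    assert (Hsplit : sum_f_R0 (fun i => r i - l i) N =
       sum_f_R0 (fun i => rL i - lL i) N + sum_f_R0 (fun i => rR i - lR i) N).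
    { rewrite <- sum_plus. apply sum_eq. intros i Hi. unfold lL, rL, lR, rR. destruct (t i); ring. }
    assert (S1 : sum_f_R0 (fun i => rL i - lL i) N <= L - A).
    { apply IHN; auto.
      - intros i Hi. unfold lL, rL. destruct (t i). apply Hlr; lia. lra.
      - intros i Hi H. unfold lL, rL, t in *. destruct (Rle_dec (r i) L). 2: lra.
        destruct (Hin i ltac:(lia) H). lra.
      - intros i j Hi Hj Hij H1 H2. unfold lL, rL in *. destruct (t i) eqn:Ei. 2: lra.
        destruct (t j). 2: lra. apply Hdj; auto; lia. }
    assert (S2 : sum_f_R0 (fun i => rR i - lR i) N <= B - Rr).
    { apply IHN; auto.
      - intros i Hi. unfold lR, rR. destruct (t i). lra. apply Hlr; lia.
      - intros i Hi H. unfold lR, rR, t in *. destruct (Rle_dec (r i) L) as [|Hn]. lra.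
        destruct (Hin i ltac:(lia) H). split; auto.
        destruct (Hdj i (S N) ltac:(lia) (le_n _) ltac:(lia) H Hne) as [E|E]; fold L Rr in E; lra.
      - intros i j Hi Hj Hij H1 H2. unfold lR, rR in *. destruct (t i) eqn:Ei. lra.
        destruct (t j). lra. apply Hdj; auto; lia. }
    lra.
Qed.

Definition qseq (n : nat) : R := INR (fst (Cantor.of_nat n)) / INR (S (snd (Cantor.of_nat n))).

Lemma qdense l r : 0 <= l -> l < r -> exists n, l <= qseq n <= r.
Proof.
  intros Hl Hr.
  destruct (archimed_cor1 (r - l) ltac:(lra)) as [m [Hm Hm0]].
  set (z := up (l * INR m)).
  destruct (archimed (l * INR m)) as [A1 A2]. fold z in A1, A2.
  assert (HINR : 0 < INR m) by (apply lt_0_INR; auto).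
  assert (Hz : (0 <= z)%Z).
  { apply le_IZR. assert (0 <= l * INR m) by nra. lra. }
  set (k := Z.to_nat z).
  assert (Hk : INR k = IZR z) by (unfold k; rewrite INR_IZR_INZ, Z2Nat.id; auto).
  exists (Cantor.to_nat (k, Nat.pred m)). unfold qseq. rewrite Cantor.cancel_of_to. cbn [fst snd].
  replace (S (Nat.pred m)) with m by lia. rewrite Hk.
  split.
  - apply Rmult_le_reg_r with (INR m); auto. replace (IZR z / INR m * INR m) with (IZR z) by (field; lra). lra.
  - apply Rmult_le_reg_r with (INR m); auto. replace (IZR z / INR m * INR m) with (IZR z) by (field; lra).
    assert (/ INR m * INR m = 1) by (field; lra).
    assert (1 <= (r - l) * INR m).
    { apply Rmult_le_reg_l with (/ INR m). apply Rinv_0_lt_compat; auto. nra. }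
    nra.
Qed.

Lemma least (P : nat -> Prop) : (exists n, P n) -> exists n, P n /\ forall m, (m < n)%nat -> ~ P m.
Proof.
  intros [n Hn]. apply NNPP. intro Hno.
  assert (forall k, forall m, (m <= k)%nat -> ~ P m).
  { induction k; intros m Hm Pm.
    - apply Hno. exists m. split; auto. intros; lia.
    - destruct (le_lt_eq_dec _ _ Hm) as [H|H]. apply (IHk m); auto; lia.
      apply Hno. exists m. split; auto. intros m' Hm' Pm'. apply (IHk m'); auto; lia. }
  apply (H n n); auto.
Qed.


Definition pm (w' w : R * R) := w' = w \/ w' = (- fst w, - snd w).
Lemma pm_sym a b : pm a b -> pm b a.
Proof. unfold pm. destruct a, b; simpl. intros [E|E]; inversion E; subst; [left|right]; auto. f_equal; ring. Qed.
Lemma pm_trans a b c : pm a b -> pm b c -> pm a c.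
Proof. unfold pm. destruct a, b, c; simpl. intros [E|E] [E'|E']; inversion E; inversion E'; subst; auto.
  left; f_equal; ring. Qed.

Lemma vnorm_ge v : Rabs (fst v) <= vnorm v /\ Rabs (snd v) <= vnorm v.
Proof. unfold vnorm. rewrite <- !sqrt_Rsqr_abs. split; apply sqrt_le_1_alt; unfold Rsqr; simpl; nra. Qed.

Lemma Ebad Gam s p kap gam eps T x : 1 <= x <= T ->
  in_S Gam s (mmul p (Mx x gam)) (eps * Rpower x (- (1/4) + 1/(kap+4))) ->
  exists w, bad kap gam eps T (fun w => exists h, Gam h /\ w = Wv p s h) w x.
Proof.
  intros Hx [v [[h [Hh Hv]] Hn]].
  exists (Wv p s h). unfold bad. split. eauto. split. auto.
  assert (Hv' : v = mapply (minv (Mx x gam)) (Wv p s h)).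
  { rewrite Hv. unfold Wv. rewrite <- mapply_mmul. f_equal. rewrite !minv_mmul, mmul_assoc. reflexivity. }
  destruct (Wv p s h) as [a b]. cbn [fst snd].
  destruct (vnorm_ge v) as [N1 N2]. rewrite Hv' in N1, N2, Hn. unfold mapply, minv, Mx in N1, N2, Hn. cbn [fst snd ma mb mc md] in N1, N2, Hn.
  assert (N1' := Rle_trans _ _ _ N1 Hn). assert (N2' := Rle_trans _ _ _ N2 Hn). clear N1 N2 Hn. rename N1' into N1. rename N2' into N2.
  set (al := 1 / (kap + 4)) in *.
  assert (Hx0 : 0 < x) by lra.
  assert (E1 : Rpower x (1/4) * Rpower x (- (1/4)) = 1) by (rewrite pw_add; replace (1/4 + - (1/4)) with 0 by lra; apply Rpower_O; auto).
  assert (E2 : Rpower x (- (1/4)) * Rpower x (- (1/4) + al) = Rpower x (al - 1/2)) by (rewrite pw_add; f_equal; field).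
  assert (E3 : Rpower x (1/4) * Rpower x (- (1/4) + al) = Rpower x al) by (rewrite pw_add; f_equal; field).
  assert (E4 : Rpower x (1/4) * Rpower x (3/4 + gam) = Rpower x (1 + gam)) by (rewrite pw_add; f_equal; field).
  pose proof (pw_pos x (1/4)). pose proof (pw_pos x (- (1/4))).
  set (d := Rpower x (- (1/4) + al)) in *.
  split.
  - replace (- 0 * a + Rpower x (1 / 4) * b) with (Rpower x (1/4) * b) in N2 by ring.
    rewrite Rabs_mult, (Rabs_right (Rpower x (1/4))) in N2 by lra.
    replace (Rabs b) with (Rpower x (- (1/4)) * (Rpower x (1/4) * Rabs b)) by (rewrite <- Rmult_assoc, (Rmult_comm (Rpower x (- (1/4)))), E1; ring).
    rewrite <- E2. replace (eps * (Rpower x (- (1 / 4)) * d)) with (Rpower x (- (1/4)) * (eps * d)) by ring.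
    apply Rmult_le_compat_l; lra.
  - replace (a - Rpower x (1 + gam) * b) with (Rpower x (1/4) * (Rpower x (- (1 / 4)) * a + - Rpower x (3 / 4 + gam) * b)).
    2: { rewrite <- E4. replace a with (Rpower x (1/4) * Rpower x (- (1/4)) * a) at 2 by (rewrite E1; ring). ring. }
    rewrite Rabs_mult, (Rabs_right (Rpower x (1/4))) by lra. rewrite <- E3.
    replace (eps * (Rpower x (1 / 4) * d)) with (Rpower x (1/4) * (eps * d)) by ring.
    apply Rmult_le_compat_l; lra.
Qed.


Lemma in_iv z x r : x - r <= z <= x + r -> Rabs (z - x) <= r.
Proof. intros. unfold Rabs; destruct Rcase_abs; lra. Qed.

Theorem lemma4p2 (Gam : mat2 -> Prop) (k : nat) (eta : nat -> option R)
  (sigma : nat -> mat2) (kappa : nat -> R) (p : mat2) (j : nat) (gam : R) :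
  nonuniform_lattice Gam ->
  cusp_data Gam k eta sigma ->
  in_G p ->
  diophantine Gam k sigma kappa p ->
  (j < k)%nat ->
  0 < gam -> gam < 1 / (kappa j + 4) ->
  exists C, 0 < C /\ exists eps0, 0 < eps0 /\
    forall eps T, 0 < eps -> eps < eps0 -> 1 <= T ->
      leb_outer_le
        (fun x => 1 <= x <= T /\
           in_S Gam (sigma j) (mmul p (Mx x gam))
                (eps * Rpower x (- (1/4) + 1 / (kappa j + 4))))
        (T * (C * eps)).
Proof.
  intros HGam Hcusp Hp Hdio Hj Hg0 Hg1.
  destruct HGam as (HG & HD & _ & _).
  destruct Hcusp as (_ & Hcj). destruct (Hcj j Hj) as (Hsig & _ & [HLd HLc]).
  set (s := sigma j) in *.
  assert (Hs : mdet s = 1) by exact Hsig.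
  destruct HLc as [M HM]. destruct (HM (M + 1)) as [t0 [Ht0 Hdt]].
  assert (Ht1 : 1 <= t0).
  { pose proof (Rabs_pos (M + 1 - t0)). pose proof (Rle_abs (M + 1 - t0)). lra. }
  assert (Ht0' : Gp Gam s (u t0)) by exact Ht0.
  assert (HLd' : exists d, 0 < d /\ forall r, Gp Gam s (u r) -> 0 < Rabs r < d -> False) by exact HLd.
  destruct Hdio as [Hkp Hd]. destruct (Hd j Hj) as [mu [nu [Hmu [Hnu Hmn]]]].
  assert (Hk : 0 < kappa j) by (apply Hkp; auto).
  set (kap := kappa j) in *.
  set (inW := fun w => exists h, Gam h /\ w = Wv p s h).
  assert (Hdio' : forall w, inW w -> mu <= Rabs (snd w) \/ nu <= rpow (Rabs (fst w)) kap * Rabs (snd w)).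
  { intros w [h [Hh Hw]]. destruct w as [a b]. apply Hmn. exists h. split; auto. }
  destruct (C1_facts kap nu Hnu) as [HC1 _].
  set (C1v := C1 kap nu) in *.
  exists (48 * C1v). split. lra.
  set (e0 := Rmin (Rmin 1 mu) (Rmin (/ (4 * C1v)) (/ (8 * t0)))).
  assert (He0 : 0 < e0).
  { unfold e0. repeat apply Rmin_pos; try lra; apply Rinv_0_lt_compat; lra. }
  exists e0. split. auto.
  intros eps T Heps Heps0 HT.
  assert (He1 : eps < 1) by (eapply Rlt_le_trans; [exact Heps0|]; unfold e0; eapply Rle_trans; apply Rmin_l).
  assert (He2 : eps < mu) by (eapply Rlt_le_trans; [exact Heps0|]; unfold e0; eapply Rle_trans; [apply Rmin_l|apply Rmin_r]).
  assert (He3 : eps < / (4 * C1v)) by (eapply Rlt_le_trans; [exact Heps0|]; unfold e0; eapply Rle_trans; [apply Rmin_r|apply Rmin_l]).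
  assert (He4 : eps < / (8 * t0)) by (eapply Rlt_le_trans; [exact Heps0|]; unfold e0; eapply Rle_trans; [apply Rmin_r|apply Rmin_r]).
  assert (He3' : eps * (4 * C1v) < 1).
  { apply Rmult_lt_reg_r with (/ (4 * C1v)). apply Rinv_0_lt_compat; lra.
    rewrite Rmult_assoc, Rinv_r, Rmult_1_r, Rmult_1_l by lra. auto. }
  assert (He4' : 8 * eps * t0 < 1).
  { apply Rmult_lt_reg_r with (/ (8 * t0)). apply Rinv_0_lt_compat; lra.
    replace (8 * eps * t0 * / (8 * t0)) with eps by (field; lra). lra. }
  assert (Hgam : 0 < gam < 1 / (kap + 4)) by (split; auto).
  assert (Heps' : 0 < eps <= 1) by lra.
  pose proof (RR_le kap gam eps T mu nu inW Hk Hgam Heps' He2 Hnu Hdio') as RRle.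
  pose proof (detb kap gam eps T mu nu inW Hk Hgam Heps' He2 Hnu Hdio') as DET.
  pose proof (closeb kap gam eps T mu nu inW Hk Hgam Heps' He2 Hnu Hdio') as CLOSE.
  set (bad' := bad kap gam eps T inW) in *.
  set (RR' := RR kap gam) in *.
  set (lamv := lam kap nu) in *.
  assert (Hlam : lamv = / (4 * C1v)) by reflexivity.
  assert (LAM : forall w x, bad' w x -> 0 < lamv * RR' w x /\ lamv * RR' w x <= x / 4).
  { intros w x H. destruct (RRle w x H) as (H1 & _ & H2). rewrite Hlam.
    assert (0 < / (4 * C1v)) by (apply Rinv_0_lt_compat; lra). split. nra.
    apply Rle_trans with (/ (4 * C1v) * (C1v * x)). apply Rmult_le_compat_l. lra. exact H1.
    right. field. lra. }
  assert (SEP : forall w x w' x' z, bad' w x -> bad' w' x' -> Rabs (z - x) <= lamv * RR' w x ->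
     Rabs (z - x') <= lamv * RR' w' x' -> pm w' w).
  { intros w x w' x' z Hw Hw' Hz Hz'.
    pose proof (DET w x w' x' z Hw Hw' Hz Hz') as Hdet.
    destruct Hw as ([h [Hh Eh]] & _). destruct Hw' as ([h' [Hh' Eh']] & _).
    destruct (sep Gam s p t0 h h' HG HD Hs Hp ltac:(lra) HLd' Ht0' Hh Hh') as [H|H].
    - exfalso. unfold det2 in H. rewrite <- Eh, <- Eh' in H. rewrite Rabs_mult, (Rabs_right t0) in H by lra.
      pose proof (Rabs_pos (fst w * snd w' - fst w' * snd w)). nra.
    - rewrite <- Eh, <- Eh' in H. exact H. }
  set (Psel := fun n (wx : (R * R) * R) => bad' (fst wx) (snd wx) /\
     Rabs (qseq n - snd wx) <= lamv * RR' (fst wx) (snd wx) /\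
     forall m, (m < n)%nat -> forall w' x', bad' w' x' -> pm w' (fst wx) ->
       ~ (Rabs (qseq m - x') <= lamv * RR' w' x')).
  set (sel := fun n => match excluded_middle_informative (exists wx, Psel n wx) with
     | left H => Some (proj1_sig (constructive_indefinite_description _ H)) | right _ => None end).
  assert (sel_spec : forall n wx, sel n = Some wx -> Psel n wx).
  { intros n wx. unfold sel. destruct excluded_middle_informative as [H|H]; intro E; inversion E.
    apply (proj2_sig (constructive_indefinite_description _ H)). }
  assert (sel_some : forall n, (exists wx, Psel n wx) -> exists wx, sel n = Some wx).
  { intros n H. unfold sel. destruct excluded_middle_informative as [H'|H']. eauto. contradiction. }
  set (a := fun n => match sel n with Some wx => snd wx - 6 * eps * RR' (fst wx) (snd wx) | None => 0 end).
  set (b := fun n => match sel n with Some wx => snd wx + 6 * eps * RR' (fst wx) (snd wx) | None => 0 end).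
  set (lJ := fun n => match sel n with Some wx => snd wx - lamv * RR' (fst wx) (snd wx) | None => 0 end).
  set (rJ := fun n => match sel n with Some wx => snd wx + lamv * RR' (fst wx) (snd wx) | None => 0 end).
  intros eta0 Heta. exists a, b. split; [|split].
  - intro n. unfold a, b. destruct (sel n) as [wx|] eqn:E. 2: lra.
    destruct (sel_spec n wx E) as (Hb & _). destruct (RRle _ _ Hb) as (_ & _ & H). nra.
  - intros x [Hx HS].
    destruct (Ebad Gam s p kap gam eps T x Hx HS) as [w Hw]. fold inW bad' in Hw.
    destruct (LAM w x Hw) as [L1 L2].
    set (P0 := fun n => exists w' x', bad' w' x' /\ pm w' w /\ Rabs (qseq n - x') <= lamv * RR' w' x').
    destruct (least P0) as [n0 [[w1 [x1 (Hb1 & Hpm1 & Hq1)]] Hmin]].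
    { destruct (qdense (x - lamv * RR' w x) (x + lamv * RR' w x)) as [n Hn]; try lra.
      exists n, w, x. split; auto. split. left; auto. apply in_iv. lra. }
    assert (HP : Psel n0 (w1, x1)).
    { split; auto. split; auto. simpl. intros m Hm w'' x'' Hb'' Hpm'' Hq''.
      apply (Hmin m Hm). exists w'', x''. split; auto. split; auto. eapply pm_trans; eauto. }
    destruct (sel_some n0 (ex_intro _ _ HP)) as [[w2 x2] Es].
    destruct (sel_spec _ _ Es) as (Hb2 & Hq2 & _). simpl in Hb2, Hq2.
    assert (H12 : pm w1 w2) by (eapply SEP; eauto).
    assert (Hw2 : pm w w2) by (eapply pm_trans; [apply pm_sym; exact Hpm1 | exact H12]).
    pose proof (CLOSE w2 x2 w x Hb2 Hw He3' Hw2) as Hc.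
    exists n0. unfold a, b. rewrite Es. simpl.
    pose proof (Rle_abs (x2 - x)). pose proof (Rle_abs (- (x2 - x))). rewrite Rabs_Ropp in H0. lra.
  - intro N.
    set (K := 24 * eps * C1v).
    assert (Hab : forall n, b n - a n = (rJ n - lJ n) * K).
    { intro n. unfold a, b, lJ, rJ, K. destruct (sel n). rewrite Hlam. field. lra. ring. }
    rewrite (sum_eq _ _ N (fun n _ => Hab n)). rewrite <- scal_sum.
    assert (Hsum : sum_f_R0 (fun n => rJ n - lJ n) N <= 2 * T - 0).
    { apply disj_sum. lra.
      - intros i _. unfold lJ, rJ. destruct (sel i) as [wx|] eqn:E. 2: lra.
        destruct (sel_spec i wx E) as (Hb & _). destruct (LAM _ _ Hb). lra.
      - intros i _. unfold lJ, rJ. destruct (sel i) as [wx|] eqn:E. 2: lra.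
        destruct (sel_spec i wx E) as (Hb & _). destruct (LAM _ _ Hb).
        pose proof Hb as (_ & Hx & _). lra.
      - intros i j0 Hi Hj0 Hij. unfold lJ, rJ.
        destruct (sel i) as [[wi xi]|] eqn:Ei. 2: lra. destruct (sel j0) as [[wj xj]|] eqn:Ej. 2: lra.
        intros _ _. simpl.
        destruct (sel_spec _ _ Ei) as (Hbi & Hqi & Hmi). destruct (sel_spec _ _ Ej) as (Hbj & Hqj & Hmj).
        simpl in *.
        destruct (Rlt_dec (xi + lamv * RR' wi xi) (xj - lamv * RR' wj xj)) as [|n1]. auto.
        destruct (Rlt_dec (xj + lamv * RR' wj xj) (xi - lamv * RR' wi xi)) as [|n2]. auto.
        exfalso. apply Rnot_lt_le in n1. apply Rnot_lt_le in n2.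
        destruct (LAM _ _ Hbi). destruct (LAM _ _ Hbj).
        set (z := Rmax (xi - lamv * RR' wi xi) (xj - lamv * RR' wj xj)).
        assert (Hzi : Rabs (z - xi) <= lamv * RR' wi xi).
        { apply in_iv. unfold z, Rmax. destruct Rle_dec; lra. }
        assert (Hzj : Rabs (z - xj) <= lamv * RR' wj xj).
        { apply in_iv. unfold z, Rmax. destruct Rle_dec; lra. }
        assert (Hp' : pm wj wi) by (eapply SEP; [exact Hbi | exact Hbj | exact Hzi | exact Hzj]).
        destruct (Nat.lt_total i j0) as [Hl|[He|Hl]].
        + apply (Hmj i Hl wi xi Hbi (pm_sym _ _ Hp') Hqi).
        + contradiction.
        + apply (Hmi j0 Hl wj xj Hbj Hp' Hqj). }
    assert (0 <= K) by (unfold K; nra).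
    assert (K * sum_f_R0 (fun n => rJ n - lJ n) N <= K * (2 * T)) by (apply Rmult_le_compat_l; lra).
    unfold K in *. nra.
Qed.
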